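(* Any incline $R$ with $|R|\geq 3$ is not $k$-simple.
   Context: A semiring $(R,+,\cdot)$ is a set with two binary operations such that $(R,+)$ is a commutative semigroup, $(R,\cdot)$ is a semigroup, and multiplication distributes over addition from both sides; no zero or identity is assumed. An incline is a semiring with $r+r=r$ for all $r$ and $x+xy=x=x+yx$ for all $x,y\in R$. A zero of $R$ is an element $0$ with $0+r=r$ and $0r=r0=0$ for all $r\in R$. An ideal of $R$ is a nonempty subset $A\subseteq R$ with $a+b\in A$ and $ra,ar\in A$ for all $a,b\in A$, $r\in R$; the trivial ideals are $R$ and, if $R$ has a zero $0$, $\{0\}$. For an ideal $A$, its $k$-closure is $\overline{A}=\{x\in R\mid x+a=b \text{ for some } a,b\in A\}$, and $A$ is a $k$-ideal if $A=\overline{A}$. $R$ is $k$-simple if it has no $k$-ideals other than the trivial ideals. *)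

(* Defs.v *)
Set Implicit Arguments.

Section Defs.
Variable R : Type.
Variables (add mul : R -> R -> R).

Definition is_semiring : Prop :=
  (forall x y z, add x (add y z) = add (add x y) z) /\
  (forall x y, add x y = add y x) /\
  (forall x y z, mul x (mul y z) = mul (mul x y) z) /\
  (forall x y z, mul x (add y z) = add (mul x y) (mul x z)) /\
  (forall x y z, mul (add x y) z = add (mul x z) (mul y z)).

Definition is_incline : Prop :=
  is_semiring /\
  (forall r, add r r = r) /\
  (forall x y, add x (mul x y) = x /\ add x (mul y x) = x).

Definition is_zero (z : R) : Prop :=
  forall r, add z r = r /\ mul z r = z /\ mul r z = z.

Definition is_ideal (A : R -> Prop) : Prop :=
  (exists a, A a) /\
  (forall a b, A a -> A b -> A (add a b)) /\
  (forall r a, A a -> A (mul r a) /\ A (mul a r)).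

Definition k_closure (A : R -> Prop) : R -> Prop :=
  fun x => exists a b, A a /\ A b /\ add x a = b.

Definition is_k_ideal (A : R -> Prop) : Prop :=
  is_ideal A /\ (forall x, A x <-> k_closure A x).

Definition is_trivial_ideal (A : R -> Prop) : Prop :=
  (forall x, A x) \/ (exists z, is_zero z /\ forall x, A x <-> x = z).

Definition k_simple : Prop :=
  forall A, is_k_ideal A -> is_trivial_ideal A.
End Defs.

(* Main.v *)
Require Import Defs.

Section S.
Variables (R : Type) (add mul : R -> R -> R).
Hypothesis H : is_incline add mul.

Definition down (a : R) : R -> Prop := fun x => add x a = a.

Lemma down_k (a : R) : is_k_ideal add mul (down a).
Proof.
  destruct H as [[As [Co [Ma [Dl Dr]]]] [Id Ab]].
  unfold down; split.
  - split; [exists a; apply Id|split].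
    + intros x y Hx Hy. rewrite <- As, Hy. exact Hx.
    + intros r x Hx. split.
      * rewrite <- Hx. rewrite As. rewrite (Co (mul r x) x).
        destruct (Ab x r) as [_ E]. rewrite E. reflexivity.
      * rewrite <- Hx. rewrite As. rewrite (Co (mul x r) x).
        destruct (Ab x r) as [E _]. rewrite E. reflexivity.
  - intros x; split.
    + intros Hx. exists a, a. split; [apply Id|split;[apply Id|exact Hx]].
    + intros [a' [b' [Ha [Hb E]]]].
      assert (Xb : add x b' = b').
      { rewrite <- E, As, Id. reflexivity. }
      rewrite <- Hb, As, Xb. reflexivity.
Qed.

Lemma triv_cases (a : R) : is_trivial_ideal add mul (down a) ->
  (forall x, add x a = a) \/ is_zero add mul a.
Proof.
  intros [T|[z [Z E]]]; [left; exact T|right].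
  destruct H as [[As [Co _]] [Id _]].
  assert (az : a = z) by (apply E; apply Id). subst; exact Z.
Qed.
End S.

Theorem lemma5p2 (R : Type) (add mul : R -> R -> R) :
  is_incline add mul ->
  (exists a b c : R, a <> b /\ a <> c /\ b <> c) ->
  ~ k_simple add mul.
Proof.
  intros H [a [b [c [ab [ac bc]]]]] K.
  assert (Co : forall x y, add x y = add y x) by (destruct H as [[_ [Co _]] _]; exact Co).
  assert (top : forall x y, (forall r, add r x = x) -> (forall r, add r y = y) -> x = y).
  { intros x y Tx Ty. rewrite <- (Tx y), Co. apply Ty. }
  assert (zer : forall x y, is_zero add mul x -> is_zero add mul y -> x = y).
  { intros x y Zx Zy. destruct (Zx y) as [E1 _]. destruct (Zy x) as [E2 _].
    rewrite <- E1, Co. symmetry. exact E2. }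
  destruct (@triv_cases R add mul H a (K _ (@down_k R add mul H a))) as [Ta|Za];
  destruct (@triv_cases R add mul H b (K _ (@down_k R add mul H b))) as [Tb|Zb];
  destruct (@triv_cases R add mul H c (K _ (@down_k R add mul H c))) as [Tc|Zc];
  first [ exact (ab (top _ _ Ta Tb)) | exact (ac (top _ _ Ta Tc)) | exact (bc (top _ _ Tb Tc))
        | exact (ab (zer _ _ Za Zb)) | exact (ac (zer _ _ Za Zc)) | exact (bc (zer _ _ Zb Zc)) ].
Qed.
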